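(* Suppose that $p$ is an odd prime. Let $\mu$ denote the number of integers $j$ with $1\le j<\frac{p}{2}$ such that the inverse $j^{-1}$ of $j$ modulo $p$ (taken as the representative in $\{1,\dots,p-1\}$) is also less than $\frac{p}{2}$. (1) If $p\equiv 3\pmod 4$, then $(p-1)!!\equiv (-1)^{\frac{\mu+1}{2}} \pmod p$. (2) If $p\equiv 1\pmod 4$, then $(p-1)!!\equiv (-1)^{\frac{\mu+1}{2}}\, i_p \pmod p$, where $i_p$ is the unique natural number less than $\frac{p}{2}$ with $i_p^2\equiv -1 \pmod p$.
   Context: For a natural number $n$, the double factorial $n!!$ is the product of the natural numbers less than or equal to $n$ that have the same parity as $n$. *)

(* Defs.v *)
From HB Require Import structures.
From mathcomp Require Import all_boot all_order all_algebra.
Set Implicit Arguments. Unset Strict Implicit. Unset Printing Implicit Defensive.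

Fixpoint dfact (n : nat) : nat :=
  match n with
  | 0 => 1
  | 1 => 1
  | (m.+2) as k => k * dfact m
  end.

Definition modinv (p j : nat) : nat :=
  odflt 0%N (omap (@nat_of_ord p) [pick k : 'I_p | (j * k) %% p == 1 %% p]).

Definition mu (p : nat) : nat :=
  #|[set j : 'I_p | (0 < j) && (2 * j < p) && (2 * modinv p j < p)]|.

(* Main.v *)
Require Import Defs.
From HB Require Import structures.
From mathcomp Require Import all_boot all_order all_algebra all_field zify ring.
Set Implicit Arguments. Unset Strict Implicit. Unset Printing Implicit Defensive.
Import Order.TTheory GRing.Theory Num.Theory.
Local Open Scope ring_scope.

Lemma Fp_natE p m n : prime p -> ((m%:R : 'F_p) = n%:R) <-> (m %% p = n %% p)%N.
Proof.
move=> hp; split=> [H|H].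
  by rewrite -!(val_Fp_nat hp) H.
by rewrite -(Fp_nat_mod hp) H Fp_nat_mod.
Qed.

Lemma Fp_nat_eq0 p m : prime p -> ((m%:R : 'F_p) = 0) <-> (p %| m)%N.
Proof. by move=> hp; rewrite (dvdn_pcharf (pchar_Fp hp)); split => /eqP. Qed.

Lemma nat_inj p m n : prime p -> (m < p)%N -> (n < p)%N -> (m%:R : 'F_p) = n%:R -> m = n.
Proof. by move=> hp mp np /(Fp_natE _ _ hp); rewrite !modn_small. Qed.

Lemma natF_neq0 p m : prime p -> (0 < m < p)%N -> (m%:R : 'F_p) != 0.
Proof.
move=> hp /andP[m0 mp]; apply/eqP => /(Fp_nat_eq0 _ hp) /(dvdn_leq m0).
by rewrite leqNgt mp.
Qed.

Lemma modinv_spec p j : prime p -> (0 < j < p)%N ->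
  (modinv p j < p)%N /\ (j%:R * (modinv p j)%:R : 'F_p) = 1.
Proof.
move=> hp jj; have /andP[j0 jp] := jj; rewrite /modinv; case: pickP => [k /eqP H | none] /=.
  split; first exact: ltn_ord.
  by rewrite -natrM -[1 : 'F_p]/(1%N%:R); apply/(Fp_natE _ _ hp); rewrite H.
have jn0 := natF_neq0 hp jj.
set x := (j%:R : 'F_p)^-1.
have xlt : (val x < p)%N by apply: leq_trans (ltn_ord x) _; rewrite (Fp_cast hp).
have := none (Ordinal xlt) => /=.
have : (j * val x)%:R = (1%N%:R : 'F_p).
  by rewrite natrM natr_Zp /x mulfV.
by move/(Fp_natE _ _ hp) ->; rewrite eqxx.
Qed.

Lemma modinv_pos p j : prime p -> (0 < j < p)%N -> (0 < modinv p j < p)%N.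
Proof.
move=> hp jj; have [lt e] := modinv_spec hp jj; rewrite lt andbT lt0n.
by apply/eqP => e0; move: e; rewrite e0 mulr0 => /eqP; rewrite eq_sym oner_eq0.
Qed.

Lemma modinv_uniq p j k : prime p -> (0 < j < p)%N -> (k < p)%N ->
  (j%:R * k%:R : 'F_p) = 1 -> modinv p j = k.
Proof.
move=> hp jj kp e; have [lt e'] := modinv_spec hp jj.
apply: (nat_inj hp lt kp).
have jn0 := natF_neq0 hp jj.
by apply: (mulfI jn0); rewrite e e'.
Qed.

Lemma modinv_inv p j : prime p -> (0 < j < p)%N -> modinv p (modinv p j) = j.
Proof.
move=> hp jj; have mm := modinv_pos hp jj; have [_ e] := modinv_spec hp jj.
apply: modinv_uniq => //; first by case/andP: jj.
by rewrite mulrC.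
Qed.
Lemma bigH R idx (op : Monoid.com_law idx) h (G : nat -> R) :
 \big[op/idx]_(j : 'I_(h.*2.+1) | (0 < j)%N && (2*j < h.*2.+1)%N) G j
   = \big[op/idx]_(1 <= j < h.+1) G j.
Proof.
rewrite -(big_mkord (fun j => (0<j)%N && (2*j < h.*2.+1)%N) G).
rewrite big_ltn_cond //= [RHS](big_nat_widen _ _ (h.*2.+1)); last by lia.
rewrite big_nat_cond [RHS]big_nat_cond; apply: eq_bigl => i /=.
lia.
Qed.

Definition Hset p : {set 'I_p} := [set j : 'I_p | (0 < j)%N && (2 * j < p)%N].

Lemma bigHset R idx (op : Monoid.com_law idx) p h (G : nat -> R) : p = h.*2.+1 ->
 \big[op/idx]_(j in Hset p) G j = \big[op/idx]_(1 <= j < h.+1) G j.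
Proof.
move=> ep; subst p; rewrite -bigH; apply: eq_bigl => j; by rewrite inE.
Qed.

Lemma dfact_prod h : dfact h.*2 = (\prod_(1 <= j < h.+1) (2*j))%N.
Proof.
elim: h => [|h IH]; first by rewrite big_geq.
rewrite big_nat_recr //= -IH mulnC; congr (_ * _)%N; lia.
Qed.

Lemma sum_half h : (\sum_(1 <= j < h.+1) (h < 2*j)%N)%N = (h - h./2)%N.
Proof.
rewrite (big_cat_nat _ (n := h./2.+1)) //=; last by lia.
rewrite (@eq_big_nat _ _ _ 1 h./2.+1 _ (fun _ => 0%N)); last by move=> i hi; lia.
rewrite (@eq_big_nat _ _ _ h./2.+1 h.+1 _ (fun _ => 1%N)); last by move=> i hi; lia.
rewrite !sum_nat_const_nat; lia.
Qed.

Lemma stepB p h : prime p -> p = h.*2.+1 ->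
  \prod_(j in Hset p) ((2*j)%:R : 'F_p) =
  (-1)^+(h - h./2) * \prod_(j in Hset p) (j%:R : 'F_p).
Proof.
move=> hp ep; have ep2 : p = (2*h).+1 by rewrite ep -mul2n.
pose v (j : nat) := if (2*j <= h)%N then (2*j)%N else (p - 2*j)%N.
have pw : forall j : 'I_p, j \in Hset p ->
    ((2*j)%:R : 'F_p) = (-1)^+(h < 2*j)%N * (v j)%:R.
  move=> j; rewrite inE /v => /andP[j0 jp]; case: (leqP (2*j) h) => hj /=.
    by rewrite expr0 mul1r.
  by rewrite natrB ?pchar_Fp_0 // ?sub0r ?expr1 ?mulN1r ?opprK //; lia.
rewrite (eq_bigr _ pw) big_split /= prodrXr.
rewrite (@bigHset _ _ addn p h (fun j : nat => nat_of_bool (h < 2*j)%N) ep) sum_half; congr (_ * _).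
pose g (j : 'I_p) : 'I_p := insubd j (v j).
have vlt : forall j : 'I_p, j \in Hset p -> (v j < p)%N.
  by move=> j; rewrite inE /v => /andP[j0 jp]; case: (leqP (2*j) h); lia.
have gv : forall j : 'I_p, j \in Hset p -> val (g j) = v j.
  by move=> j jH; rewrite /g val_insubd vlt.
have gH : forall j : 'I_p, j \in Hset p -> g j \in Hset p.
  move=> j jH; rewrite inE gv //; move: jH; rewrite inE /v => /andP[j0 jp].
  case: (leqP (2*j) h); lia.
have ginj : {in Hset p &, injective g}.
  move=> a b aH bH e; apply: ord_inj; have := congr1 val e; rewrite !gv //.
  move: aH bH; rewrite !inE /v => /andP[a0 ap] /andP[b0 bp].
  case: (leqP (2*a) h); case: (leqP (2*b) h); lia.
have gimg : g @: Hset p = Hset p.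
  apply/eqP; rewrite eqEcard card_in_imset // leqnn andbT.
  by apply/subsetP => y /imsetP [x xH ->]; apply: gH.
rewrite -{2}gimg big_imset //=; apply: eq_bigr => j jH; by rewrite gv.
Qed.
Lemma pairing (T : finType) (R : comRingType) (s : T -> T) (F : T -> R) (c : R)
  (A : {set T}) :
 (forall x, x \in A -> s x \in A) -> (forall x, x \in A -> s (s x) = x) ->
 (forall x, x \in A -> s x != x -> F x * F (s x) = c) ->
 exists k, #|A| = (#|[set x in A | s x == x]| + k.*2)%N /\
   \prod_(x in A) F x = \prod_(x in A | s x == x) F x * c ^+ k.
Proof.
move=> hs hss hF.
elim: {A}_.+1 {-2}A (ltnSn #|A|) hs hss hF => // n IH A hA hs hss hF.
case: (pickP [pred x in A | s x != x]) => [x /= /andP[xA sx] | none].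
  set A' := A :\ x :\ s x.
  have sxA' : s x \in A :\ x by rewrite !inE sx hs.
  have hA' : forall y, y \in A' -> (y \in A) && (y != x) && (y != s x).
    by move=> y; rewrite !inE; case/andP=> -> /andP[-> ->].
  have [||||k [Hk Hp]] := IH A'.
  - have c1 := cardsD1 x A; have c2 := cardsD1 (s x) (A :\ x); rewrite xA in c1; rewrite sxA' in c2; rewrite /A'; simpl in *; lia.
  - move=> y /hA' /andP[/andP[yA yx] ysx]; rewrite !inE hs // andbT.
    apply/andP; split.
      by apply: contraNneq yx => e; rewrite -(hss y yA) e hss.
    by apply: contraNneq ysx => e; rewrite -(hss y yA) e.
  - by move=> y /hA' /andP[/andP[yA _] _]; apply: hss.
  - by move=> y /hA' /andP[/andP[yA _] _]; apply: hF.
  have fixE : [set y in A' | s y == y] = [set y in A | s y == y].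
    apply/setP=> y; rewrite !inE; case: (eqVneq y x) => [->|yx].
      by rewrite (negbTE sx) !andbF.
    case: (eqVneq y (s x)) => [->|ysx]; last by [].
    by rewrite hss // eq_sym (negbTE sx) !andbF.
  exists k.+1; split.
    rewrite (cardsD1 x A) xA (cardsD1 (s x) (A :\ x)) sxA' -/A' Hk -fixE.
    by rewrite doubleS; lia.
  rewrite (big_setD1 x xA) (big_setD1 (s x) sxA') -/A'.
  rewrite /= Hp mulrA hF // exprS.
  have E : forall B : {set T}, \prod_(y in B | s y == y) F y = \prod_(y in [set y in B | s y == y]) F y.
    by move=> B; apply: eq_bigl => y; rewrite !inE.
  rewrite !E fixE.
  ring.
exists 0%N; split.
  rewrite addn0; apply: eq_card => y; rewrite !inE.
  by case yA: (y \in A) => //; move: (none y); rewrite /= yA /= => /negbFE ->.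
rewrite expr0 mulr1; apply: eq_bigl => y.
by case yA: (y \in A) => //; move: (none y); rewrite /= yA /= => /negbFE ->.
Qed.

Lemma natF_sub p m : prime p -> (m <= p)%N -> (((p - m)%:R : 'F_p) = - m%:R).
Proof. by move=> hp mp; rewrite natrB // (pchar_Fp_0 hp) sub0r. Qed.

Definition Bset p : {set 'I_p} :=
  [set j : 'I_p | (0 < j)%N && (2 * j < p)%N && (2 * modinv p j < p)%N].

Lemma stepC p h : prime p -> p = h.*2.+1 -> (0 < h)%N ->
  exists k, mu p = (1 + k.*2)%N /\ \prod_(j in Bset p) (j%:R : 'F_p) = 1.
Proof.
move=> hp ep h0; have ep2 : p = (2*h).+1 by rewrite ep -mul2n.
pose s (j : 'I_p) : 'I_p := insubd j (modinv p j).
have jj : forall j : 'I_p, j \in Bset p -> (0 < j < p)%N.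
  by move=> j; rewrite inE => /andP[/andP[j0 _] _]; rewrite j0 ltn_ord.
have sv : forall j : 'I_p, j \in Bset p -> val (s j) = modinv p j.
  move=> j /jj jB; rewrite /s val_insubd.
  by have /andP[_ ->] := modinv_pos hp jB.
have sB : forall j, j \in Bset p -> s j \in Bset p.
  move=> j jB; have := jB; rewrite !inE sv // => /andP[/andP[j0 jp] mp].
  have /andP[m0 _] := modinv_pos hp (jj _ jB).
  by rewrite m0 mp modinv_inv // jj.
have ss : forall j, j \in Bset p -> s (s j) = j.
  by move=> j jB; apply: ord_inj; rewrite sv ?sB // sv // modinv_inv // jj.
have hF : forall j, j \in Bset p -> s j != j -> (j%:R : 'F_p) * (s j)%:R = 1.
  by move=> j jB _; rewrite sv //; case: (modinv_spec hp (jj _ jB)).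
have [k [Hk Hp]] := @pairing _ _ s (fun j : 'I_p => (j%:R : 'F_p)) 1 (Bset p) sB ss hF.
have h1 : (1 < p)%N by lia.
pose o1 : 'I_p := Ordinal h1.
have m1 : modinv p 1 = 1%N by apply: modinv_uniq => //; rewrite ?mulr1 //; lia.
have fixE : [set x in Bset p | s x == x] = [set o1].
  apply/setP => x; rewrite in_set1; apply/idP/idP.
    move=> /setIdP[xB /eqP e]; have := congr1 val e; rewrite sv // => em.
    have [_ e1] := modinv_spec hp (jj _ xB); rewrite em in e1.
    have : ((x%:R : 'F_p) - 1) * (x%:R + 1) = 0.
      by rewrite mulrDr !mulrBl e1 mul1r mulr1; ring.
    move/eqP; rewrite mulf_eq0 => /orP[|]; rewrite ?subr_eq0 ?addr_eq0 => /eqP ex.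
      apply/eqP; apply: ord_inj => /=; apply: (nat_inj hp) => //; lia.
    exfalso; move: xB; rewrite inE => /andP[/andP[x0 xp] _].
    have : (((x + 1)%N)%:R : 'F_p) = 0 by rewrite natrD ex addNr.
    move/(Fp_nat_eq0 _ hp)/dvdn_leq; lia.
  move/eqP => ->; have o1B : o1 \in Bset p by rewrite inE /= m1; lia.
  apply/setIdP; split => //.
  by apply/eqP; apply: ord_inj; rewrite sv ?inE /= ?m1 //; lia.
exists k; split.
  by rewrite -[mu p]/#|Bset p| Hk fixE cards1.
rewrite Hp expr1n mulr1.
rewrite (eq_bigl (fun x => x \in [set x in Bset p | s x == x])); last by move=> x; rewrite !inE.
by rewrite fixE big_set1.
Qed.

Definition sqm1 p (x : nat) : bool := ((x%:R * x%:R : 'F_p) == -1).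

Definition Cset p : {set 'I_p} :=
  [set j : 'I_p | (0 < j)%N && (2 * j < p)%N && ~~ (2 * modinv p j < p)%N].

Lemma stepD p h : prime p -> p = h.*2.+1 ->
  exists k, #|Cset p| =
     (#|[set x in Cset p | sqm1 p x]| + k.*2)%N /\
   \prod_(j in Cset p) (j%:R : 'F_p) =
     \prod_(j in [set x in Cset p | sqm1 p x]) (j%:R : 'F_p)
       * (-1)^+k.
Proof.
move=> hp ep; have ep2 : p = (2*h).+1 by rewrite ep -mul2n.
pose s (j : 'I_p) : 'I_p := insubd j (p - modinv p j)%N.
have jj : forall j : 'I_p, j \in Cset p -> (0 < j < p)%N.
  by move=> j; rewrite inE => /andP[/andP[j0 _] _]; rewrite j0 ltn_ord.
have sv : forall j : 'I_p, j \in Cset p -> val (s j) = (p - modinv p j)%N.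
  move=> j /jj jC; rewrite /s val_insubd.
  have := modinv_pos hp jC => /andP[m0 mp].
  by have -> : (p - modinv p j < p)%N by lia.
have key : forall j : 'I_p, j \in Cset p ->
    modinv p (p - modinv p j) = (p - j)%N.
  move=> j jC; have /andP[m0 mp] := modinv_pos hp (jj _ jC).
  have /andP[j0 jp] := jj _ jC.
  apply: modinv_uniq => //; try lia.
  rewrite !natF_sub //; try lia.
  by rewrite mulrNN mulrC; case: (modinv_spec hp (jj _ jC)).
have sC : forall j, j \in Cset p -> s j \in Cset p.
  move=> j jC; have := jC; rewrite !inE sv // key // => /andP[/andP[j0 jp] mp].
  have /andP[m0 mp'] := modinv_pos hp (jj _ jC).
  apply/andP; split; first (apply/andP; split); lia.
have ss : forall j, j \in Cset p -> s (s j) = j.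
  move=> j jC; apply: ord_inj; rewrite sv ?sC // sv // key //.
  have /andP[j0 jp] := jj _ jC; lia.
have hF : forall j, j \in Cset p -> s j != j -> (j%:R : 'F_p) * (s j)%:R = -1.
  move=> j jC _; have /andP[m0 mp] := modinv_pos hp (jj _ jC).
  rewrite sv // natF_sub //; last by lia.
  by rewrite mulrN; case: (modinv_spec hp (jj _ jC)) => _ ->.
have [k [Hk Hp]] := @pairing _ _ s (fun j : 'I_p => (j%:R : 'F_p)) (-1) (Cset p) sC ss hF.
have fixE : [set x in Cset p | s x == x] =
            [set x in Cset p | sqm1 p x].
  apply/setP => x; apply/setIdP/setIdP => -[xC e]; split => //; rewrite /sqm1 in e *.
    have /andP[m0 mp] := modinv_pos hp (jj _ xC).
    have /andP[x0 xp] := jj _ xC.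
    move/eqP: e => /(congr1 val); rewrite sv // => e.
    have em : modinv p x = (p - x)%N by move: e => /= e; lia.
    have [_ e1] := modinv_spec hp (jj _ xC).
    rewrite em natF_sub // in e1; last by lia.
    by rewrite mulrN in e1; rewrite -[_ * _]opprK e1.
  have /andP[x0 xp] := jj _ xC.
  have em : modinv p x = (p - x)%N.
    apply: modinv_uniq => //; try lia.
    by rewrite natF_sub ?mulrN ?(eqP e) ?opprK //; lia.
  by apply/eqP; apply: ord_inj; rewrite sv // em; lia.
exists k; split; first by rewrite Hk fixE.
rewrite Hp -fixE; congr (_ * _).
by apply: eq_bigl => x; rewrite inE.
Qed.

Lemma Hsplit p : \prod_(j in Hset p) (j%:R : 'F_p) =
  \prod_(j in Bset p) (j%:R : 'F_p) * \prod_(j in Cset p) (j%:R : 'F_p).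
Proof.
rewrite (bigID (fun j : 'I_p => (2 * modinv p j < p)%N)) /=; congr (_ * _);
  by apply: eq_bigl => j; rewrite !inE.
Qed.

Lemma Hcard p h : p = h.*2.+1 -> #|Hset p| = (#|Bset p| + #|Cset p|)%N.
Proof.
move=> ep; rewrite -!sum1_card (bigID (fun j : 'I_p => (2 * modinv p j < p)%N)) /=.
by congr (_ + _)%N; apply: eq_bigl => j; rewrite !inE.
Qed.

Lemma HcardE p h : p = h.*2.+1 -> #|Hset p| = h.
Proof.
move=> ep; rewrite -sum1_card (@bigHset _ _ addn p h (fun _ => 1%N) ep).
by rewrite sum_nat_const_nat muln1 subn1.
Qed.

Lemma toF p (a b : int) : prime p -> ((a%:~R : 'F_p) = b%:~R) -> (a = b %[mod p])%Z.
Proof.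
move=> hp e; apply/eqP; rewrite eqz_mod_dvd (dvdz_pcharf (pchar_Fp hp)) rmorphB /=.
by rewrite e subrr.
Qed.

Lemma noQ p h x : prime p -> p = h.*2.+1 -> odd h -> (0 < x < p)%N -> ~~ sqm1 p x.
Proof.
move=> hp ep oh xx; apply/negP => /eqP e.
have xn0 := natF_neq0 hp xx.
have F := expf_card (x%:R : 'F_p); rewrite (card_Fp hp) in F.
have F2 : (x%:R : 'F_p) ^+ (h.*2) = 1.
  apply: (mulfI xn0); rewrite mulr1 -exprS -ep; exact: F.
rewrite -mul2n exprM expr2 e -signr_odd oh /= expr1 in F2.
have : ((2%N)%:R : 'F_p) = 0 by rewrite mulr2n -{1}F2 addNr.
move/(Fp_nat_eq0 _ hp)/dvdn_leq => /(_ isT); have := prime_gt1 hp; lia.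
Qed.

Lemma Qone p h i : prime p -> p = h.*2.+1 -> (2 * i < p)%N -> ((i ^ 2).+1 %% p = 0)%N ->
  exists oi : 'I_p, val oi = i /\ [set x in Cset p | sqm1 p x] = [set oi].
Proof.
move=> hp ep ip ie; have ep2 : p = (2*h).+1 by rewrite ep -mul2n.
have i0 : (0 < i)%N.
  rewrite lt0n; apply/eqP => i0; move: ie; rewrite i0 /= modn_small //.
  have := prime_gt1 hp; lia.
have ii : (0 < i < p)%N by lia.
have isq : (i%:R * i%:R : 'F_p) = -1.
  have : (((i ^ 2).+1)%:R : 'F_p) = 0 by apply/(Fp_nat_eq0 _ hp); rewrite /dvdn ie.
  rewrite -[(i ^ 2).+1]addn1 natrD natrX expr2 => /eqP; rewrite addr_eq0 => /eqP //.
have mi : modinv p i = (p - i)%N.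
  apply: modinv_uniq => //; try lia.
  by rewrite natF_sub ?mulrN ?isq ?opprK //; lia.
have ilt : (i < p)%N by lia.
exists (Ordinal ilt); split => //.
apply/setP => x; rewrite in_set1; apply/idP/idP.
  move=> /setIdP[xC e]; move: xC; rewrite inE => /andP[/andP[x0 xp] _].
  rewrite /sqm1 in e.
  have : ((x%:R : 'F_p) - i%:R) * (x%:R + i%:R) = 0.
    by rewrite mulrDr !mulrBl (eqP e) isq; ring.
  move/eqP; rewrite mulf_eq0 => /orP[|]; rewrite ?subr_eq0 ?addr_eq0 => /eqP ex.
    apply/eqP; apply: ord_inj => /=; apply: (nat_inj hp) => //; lia.
  exfalso.
  have : (((x + i)%N)%:R : 'F_p) = 0 by rewrite natrD ex addNr.
  move/(Fp_nat_eq0 _ hp)/dvdn_leq; lia.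
move/eqP => ->; apply/setIdP; split; last by rewrite /sqm1 /= isq.
by rewrite inE /= mi; lia.
Qed.

Lemma sign_fix (R : comRingType) a b c : (a = b + c.*2)%N -> ((-1) ^+ a : R) = (-1) ^+ b.
Proof. by move=> ->; rewrite exprD -mul2n exprM expr2 mulrNN mul1r expr1n mulr1. Qed.

Local Close Scope ring_scope.

Theorem theorem8 (p : nat) (hp : prime p) (hodd : odd p) :
  (p %% 4 = 3 ->
     ((dfact p.-1)%:Z = (-1) ^+ ((mu p).+1 %/ 2) %[mod p])%Z) /\
  (p %% 4 = 1 ->
     forall i : nat, 2 * i < p -> (i ^ 2).+1 %% p = 0 ->
     ((dfact p.-1)%:Z = (-1) ^+ ((mu p).+1 %/ 2) * i%:Z %[mod p])%Z).
Proof.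
have [h ep] : exists h, p = h.*2.+1.
  by exists p./2; rewrite -{1}(odd_double_half p) hodd.
have ep2 : p = (2*h).+1 by rewrite ep -mul2n.
have h0 : 0 < h by have := prime_gt1 hp; lia.
have pm1 : p.-1 = h.*2 by rewrite ep.
have [k1 [Hmu HB]] := stepC hp ep h0.
have [k2 [HC HCp]] := stepD hp ep.
have Hc := Hcard ep; rewrite (HcardE ep) -[#|Bset p|]/(mu p) in Hc.
have main : (((dfact p.-1)%:R : 'F_p) = (-1)^+((h - h./2)%N) *
    (\prod_(j in [set x in Cset p | sqm1 p x]) (j%:R : 'F_p) * (-1)^+k2))%R.
  rewrite pm1 dfact_prod -(@bigHset _ _ muln p h (fun j => 2*j) ep) natr_prod.
  by rewrite (stepB hp ep) Hsplit HB mul1r HCp.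
split.
  move=> p3; apply: (toF hp).
  have oh : odd h by move: p3; rewrite ep2; lia.
  have Q0 : [set x in Cset p | sqm1 p x] = set0.
    apply/setP => x; rewrite in_set0; apply/negbTE/negP => /setIdP[xC e].
    move: xC; rewrite inE => /andP[/andP[x0 _] _].
    by have := noQ hp ep oh (x := x); rewrite e x0 ltn_ord => /(_ isT).
  rewrite Q0 cards0 in HC; rewrite Q0 big_set0 mul1r in main.
  rewrite rmorphXn rmorphN1 /= -pmulrn main -exprD; apply: (@sign_fix _ _ _ k2).
  rewrite -divn2; lia.
move=> p1 i ip ie; apply: (toF hp).
have [oi [oiv Qe]] := Qone hp ep ip ie.
rewrite Qe cards1 in HC; rewrite Qe big_set1 oiv in main.
rewrite rmorphM rmorphXn rmorphN1 /= -!pmulrn main [(i%:R * _)%R]mulrC mulrA -exprD; congr (_ * _)%R.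
apply: (@sign_fix _ _ _ k2); rewrite -divn2; lia.
Qed.
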